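(* For a thermodynamic Stephani universe, the fluid velocity $u$ satisfies $\sigma=0$ and $d\!\left[\mathbf a-\frac13\theta u\right]=0$ (i.e. the comoving observer can measure isotropic radiation) if and only if $b''(R)=0$, i.e. $b(R)=b_1+b_2R$ with constants $b_1,b_2$. In that case the function $\beta=R\alpha$ satisfies $d\ln\beta=\mathbf a-\frac13\theta u$, and the test radiation fluid has $\rho_r=3p_r=a_R\Theta_r^4$ with $\Theta_r=\Theta_0\frac{R_0}{R}\left[1+\frac{b_2wR}{1+b_1w}\right]$.
   Context: Thermodynamic Stephani universe: $ds^2=-\alpha^2dt^2+\Omega^2(dx^2+dy^2+dz^2)$ with $L=R(t)/(1+b(t)w)$, $\Omega=\frac{w}{2z}L$, $\alpha=R\,\partial_R\ln L=\frac{1+(b-Rb')w}{1+bw}$, $w=2z/(1+\frac\varepsilon4 r^2)$, $r^2=x^2+y^2+z^2$, $\varepsilon\in\{0,\pm1\}$; functions of $t$ regarded as functions of $R$ (prime $=d/dR$, $\dot R\neq0$). $u=\alpha^{-1}\partial_t$ (as a 1-form $u=-\alpha\,dt$), $\sigma$ its shear, $\mathbf a$ its acceleration, $\theta=3\dot R/R$ its expansion; $a_R,\Theta_0,R_0$ are constants. *)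

(* Defs.v *)
From Stdlib Require Import Reals.
From Coquelicot Require Import Coquelicot.
Open Scope R_scope.

(** Spacetime points in coordinates (t,x,y,z) = (p 0, p 1, p 2, p 3);
    coordinates with index >= 4 are never used. *)
Definition pt := nat -> R.
Definition upd (p : pt) (mu : nat) (s : R) : pt :=
  fun k => if Nat.eqb k mu then s else p k.
Definition pd (mu : nat) (f : pt -> R) (p : pt) : R :=
  Derive (fun s => f (upd p mu s)) (p mu).
Definition sum4 (f : nat -> R) : R := f 0%nat + f 1%nat + f 2%nat + f 3%nat.

(** Data of a thermodynamic Stephani universe: curvature index eps,
    scale factor R(t), and b regarded as a function B of R (b(t) = B(R(t))). *)
Record SU := mkSU { eps : R; Rf : R -> R; B : R -> R }.

Section Model.
Variable S : SU.

Definition r2 (p : pt) : R := p 1%nat ^ 2 + p 2%nat ^ 2 + p 3%nat ^ 2.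
Definition Fden (p : pt) : R := 1 + eps S / 4 * r2 p.
Definition w (p : pt) : R := 2 * p 3%nat / Fden p.
Definition Rt (p : pt) : R := Rf S (p 0%nat).
Definition L (p : pt) : R := Rt p / (1 + B S (Rt p) * w p).
(** Omega = w/(2z) L, written in the equivalent form L/(1 + eps r^2/4)
    (no 0/0 at z = 0). *)
Definition Om (p : pt) : R := L p / Fden p.
Definition alpha (p : pt) : R :=
  (1 + (B S (Rt p) - Rt p * Derive (B S) (Rt p)) * w p) / (1 + B S (Rt p) * w p).

Definition g (mu nu : nat) (p : pt) : R :=
  if Nat.eqb mu nu then (if Nat.eqb mu 0 then - alpha p ^ 2 else Om p ^ 2) else 0.
Definition ginv (mu nu : nat) (p : pt) : R :=
  if Nat.eqb mu nu then / g mu mu p else 0.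

Definition Gam (lam mu nu : nat) (p : pt) : R :=
  / 2 * sum4 (fun s => ginv lam s p *
     (pd mu (g s nu) p + pd nu (g s mu) p - pd s (g mu nu) p)).

(** fluid velocity: as a 1-form u = -alpha dt; vector u^mu by raising *)
Definition ul (mu : nat) (p : pt) : R := if Nat.eqb mu 0 then - alpha p else 0.
Definition uu (mu : nat) (p : pt) : R := sum4 (fun nu => ginv mu nu p * ul nu p).

Definition Du (nu mu : nat) (p : pt) : R :=
  pd nu (ul mu) p - sum4 (fun lam => Gam lam nu mu p * ul lam p).
Definition acc (mu : nat) (p : pt) : R := sum4 (fun nu => uu nu p * Du nu mu p).
Definition theta (p : pt) : R :=
  sum4 (fun mu => sum4 (fun nu => ginv mu nu p * Du mu nu p)).
Definition hproj (mu nu : nat) (p : pt) : R := g mu nu p + ul mu p * ul nu p.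
Definition shear (mu nu : nat) (p : pt) : R :=
  / 2 * (Du mu nu p + Du nu mu p) + / 2 * (acc mu p * ul nu p + acc nu p * ul mu p)
  - theta p / 3 * hproj mu nu p.
Definition omega1 (mu : nat) (p : pt) : R := acc mu p - theta p / 3 * ul mu p.
Definition dform (mu nu : nat) (p : pt) : R :=
  pd mu (omega1 nu) p - pd nu (omega1 mu) p.
Definition beta (p : pt) : R := Rt p * alpha p.

Definition Tup (rho pr : pt -> R) (mu nu : nat) (p : pt) : R :=
  (rho p + pr p) * uu mu p * uu nu p + pr p * ginv mu nu p.
Definition divT (T : nat -> nat -> pt -> R) (nu : nat) (p : pt) : R :=
  sum4 (fun mu => pd mu (T mu nu) p
        + sum4 (fun lam => Gam mu mu lam p * T lam nu p + Gam nu mu lam p * T mu lam p)).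

Definition Thetar (b1 b2 Th0 R0 : R) (p : pt) : R :=
  Th0 * R0 / Rt p * (1 + b2 * w p * Rt p / (1 + b1 * w p)).

Definition InD (t1 t2 : R) (p : pt) : Prop :=
  t1 < p 0%nat < t2 /\ Fden p <> 0 /\ 1 + B S (Rt p) * w p <> 0 /\ 0 < alpha p.

End Model.

(* Main.v *)
Require Import Defs.
From Stdlib Require Import Reals Lra Lia FunctionalExtensionality.
From Coquelicot Require Import Coquelicot.
Open Scope R_scope.

Module P1.

Lemma upd_same (p : pt) k : upd p k (p k) = p.
Proof. apply functional_extensionality; intro j; unfold upd.
destruct (Nat.eqb j k) eqn:E; [apply Nat.eqb_eq in E; subst|]; reflexivity. Qed.

Lemma Derive_via (f h : R -> R) x l : (forall s, f s = h s) -> is_derive h x l -> Derive f x = l.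
Proof. intros E H. rewrite (Derive_ext f h x E). now apply is_derive_unique. Qed.

Lemma D_negsq (a : R->R) x : ex_derive a x -> Derive (fun s => - a s ^2) x = -(2 * a x * Derive (fun s => a s) x).
Proof. intro H. apply is_derive_unique; auto_derive; [tauto | ring]. Qed.
Lemma D_sq (a : R->R) x : ex_derive a x -> Derive (fun s => a s ^2) x = 2 * a x * Derive (fun s => a s) x.
Proof. intro H. apply is_derive_unique; auto_derive; [tauto | ring]. Qed.
Lemma D_neg (a : R->R) x : ex_derive a x -> Derive (fun s => - a s) x = - Derive (fun s => a s) x.
Proof. intro H. apply is_derive_unique; auto_derive; [tauto | ring]. Qed.
Lemma D_zero x : Derive (fun _ : R => 0) x = 0.
Proof. apply Derive_const. Qed.

Definition line (f : pt -> R) (p : pt) (k : nat) : R -> R := fun s => f (upd p k s).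

Lemma locally_nz (h : R -> R) x : ex_derive h x -> h x <> 0 -> locally x (fun y => h y <> 0).
Proof.
  intros Hd Hn. apply ex_derive_continuous in Hd.
  assert (Hp : 0 < Rabs (h x)) by (apply Rabs_pos_lt; auto).
  apply (Hd (fun z => z <> 0)). exists (mkposreal _ Hp). intros z Hz Hz0.
  unfold ball in Hz; simpl in Hz; unfold AbsRing_ball, abs, minus, plus, opp in Hz; simpl in Hz.
  rewrite Hz0 in Hz. rewrite Rplus_0_l, Rabs_Ropp in Hz. lra.
Qed.
Lemma locally_pos (h : R -> R) x : ex_derive h x -> 0 < h x -> locally x (fun y => 0 < h y).
Proof.
  intros Hd Hn. apply ex_derive_continuous in Hd.
  apply (Hd (fun z => 0 < z)). exists (mkposreal _ Hn). intros z Hz.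
  unfold ball in Hz; simpl in Hz; unfold AbsRing_ball, abs, minus, plus, opp in Hz; simpl in Hz.
  apply Rabs_def2 in Hz. lra.
Qed.
Lemma locally_interval a b x : a < x < b -> locally x (fun y => a < y < b).
Proof.
  intros H. assert (Hp : 0 < Rmin (x - a) (b - x)) by (apply Rmin_pos; lra).
  exists (mkposreal _ Hp). intros z Hz.
  unfold ball in Hz; simpl in Hz; unfold AbsRing_ball, abs, minus, plus, opp in Hz; simpl in Hz.
  apply Rabs_def2 in Hz. pose proof (Rmin_l (x-a) (b-x)). pose proof (Rmin_r (x-a) (b-x)). lra.
Qed.

End P1.
Import P1.

Module P2.

Section Gen.
Variable S : SU.
Variable p : pt.
Hypothesis HdA : forall k, (k < 4)%nat -> ex_derive (line (alpha S) p k) (p k).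
Hypothesis HdW : forall k, (k < 4)%nat -> ex_derive (line (Om S) p k) (p k).
Hypothesis HA : alpha S p <> 0.
Hypothesis HW : Om S p <> 0.

Definition gd (m n k : nat) : R :=
  if Nat.eqb m n then (if Nat.eqb m 0 then -(2 * alpha S p * pd k (alpha S) p)
                        else 2 * Om S p * pd k (Om S) p) else 0.
Definition gi (m : nat) : R := if Nat.eqb m 0 then / (- alpha S p ^ 2) else / (Om S p ^ 2).

Lemma pd_g m n k : (k < 4)%nat -> pd k (g S m n) p = gd m n k.
Proof.
  intro Hk. unfold gd, g. destruct (Nat.eqb m n); [destruct (Nat.eqb m 0)|].
  - transitivity (Derive (fun s => - line (alpha S) p k s ^ 2) (p k)); [reflexivity|].
    rewrite D_negsq by auto. unfold line; rewrite upd_same; reflexivity.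
  - transitivity (Derive (fun s => line (Om S) p k s ^ 2) (p k)); [reflexivity|].
    rewrite D_sq by auto. unfold line; rewrite upd_same; reflexivity.
  - apply D_zero.
Qed.

Lemma pd_ul m k : (k < 4)%nat -> pd k (ul S m) p = if Nat.eqb m 0 then - pd k (alpha S) p else 0.
Proof.
  intro Hk. unfold ul. destruct (Nat.eqb m 0).
  - transitivity (Derive (fun s => - line (alpha S) p k s) (p k)); [reflexivity|].
    rewrite D_neg by auto. reflexivity.
  - apply D_zero.
Qed.

Lemma ginv_eq m : ginv S m m p = gi m.
Proof. unfold ginv, gi, g. rewrite Nat.eqb_refl. destruct (Nat.eqb m 0); reflexivity. Qed.

Lemma Gam_eq lam mu nu : (lam < 4)%nat -> (mu < 4)%nat -> (nu < 4)%nat ->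
  Gam S lam mu nu p = / 2 * gi lam * (gd lam nu mu + gd lam mu nu - gd mu nu lam).
Proof.
  intros Hl Hm Hn. unfold Gam, sum4. rewrite !pd_g by lia.
  destruct lam as [|[|[|[|]]]]; try lia; rewrite <- ginv_eq; cbv [ginv Nat.eqb]; ring.
Qed.

Ltac crunch :=
  repeat (rewrite Gam_eq by lia); repeat (rewrite pd_ul by lia);
  cbv [gd gi ginv g ul Nat.eqb]; field; auto.

Lemma shear_zero mu nu : (mu < 4)%nat -> (nu < 4)%nat -> shear S mu nu p = 0.
Proof.
  intros Hm Hn. unfold shear, hproj, acc, theta, uu, Du, sum4.
  destruct mu as [|[|[|[|]]]]; try lia; destruct nu as [|[|[|[|]]]]; try lia; crunch.
Qed.

Lemma omega1_eq mu : (mu < 4)%nat -> omega1 S mu p =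
  if Nat.eqb mu 0 then pd 0 (Om S) p / Om S p else pd mu (alpha S) p / alpha S p.
Proof.
  intros Hm. unfold omega1, acc, theta, uu, Du, sum4.
  destruct mu as [|[|[|[|]]]]; try lia; crunch.
Qed.
End Gen.

End P2.
Import P2.

Module P3.

Lemma D_T00 (a r q : R -> R) x : ex_derive a x -> ex_derive r x -> ex_derive q x -> a x <> 0 ->
  Derive (fun s => (r s + q s) * (/ - a s ^ 2 * - a s) * (/ - a s ^ 2 * - a s) + q s * / - a s ^ 2) x
  = Derive (fun s => r s) x / a x ^ 2 - 2 * r x * Derive (fun s => a s) x / a x ^ 3.
Proof. intros. apply is_derive_unique; auto_derive. repeat split; auto.
  all: try (intro; apply H2; nra). field; auto. Qed.
Lemma D_Tii (o q : R -> R) x : ex_derive o x -> ex_derive q x -> o x <> 0 ->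
  Derive (fun s => q s * / (o s ^ 2)) x
  = Derive (fun s => q s) x / o x ^ 2 - 2 * q x * Derive (fun s => o s) x / o x ^ 3.
Proof. intros. apply is_derive_unique; auto_derive. repeat split; auto.
  all: try (intro; apply H1; nra). field; auto. Qed.

Lemma Tup_pt S rho pr m n q : (m < 4)%nat -> (n < 4)%nat ->
  Tup S rho pr m n q = if Nat.eqb m n then (if Nat.eqb m 0 then
     (rho q + pr q) * (/ - alpha S q ^ 2 * - alpha S q) * (/ - alpha S q ^ 2 * - alpha S q)
      + pr q * / - alpha S q ^ 2 else pr q * / (Om S q ^ 2)) else 0.
Proof. intros Hm Hn. unfold Tup, uu, sum4.
  destruct m as [|[|[|[|]]]]; try lia; destruct n as [|[|[|[|]]]]; try lia;
  cbv [ginv g ul Nat.eqb]; ring. Qed.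

Section Gen2.
Variable S : SU.
Variable p : pt.
Variables rho pr : pt -> R.
Hypothesis HdA : forall k, (k < 4)%nat -> ex_derive (line (alpha S) p k) (p k).
Hypothesis HdW : forall k, (k < 4)%nat -> ex_derive (line (Om S) p k) (p k).
Hypothesis Hdr : forall k, (k < 4)%nat -> ex_derive (line rho p k) (p k).
Hypothesis Hdp : forall k, (k < 4)%nat -> ex_derive (line pr p k) (p k).
Hypothesis HA : alpha S p <> 0.
Hypothesis HW : Om S p <> 0.

Lemma pd_Tup m n k : (m < 4)%nat -> (n < 4)%nat -> (k < 4)%nat ->
  pd k (Tup S rho pr m n) p = if Nat.eqb m n then (if Nat.eqb m 0 then
     pd k rho p / alpha S p ^ 2 - 2 * rho p * pd k (alpha S) p / alpha S p ^ 3
   else pd k pr p / Om S p ^ 2 - 2 * pr p * pd k (Om S) p / Om S p ^ 3) else 0.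
Proof.
  intros Hm Hn Hk. unfold pd at 1.
  rewrite (Derive_ext _ (fun s => if Nat.eqb m n then (if Nat.eqb m 0 then
     (line rho p k s + line pr p k s) * (/ - line (alpha S) p k s ^ 2 * - line (alpha S) p k s) * (/ - line (alpha S) p k s ^ 2 * - line (alpha S) p k s)
      + line pr p k s * / - line (alpha S) p k s ^ 2 else line pr p k s * / (line (Om S) p k s ^ 2)) else 0))
   by (intro s; apply Tup_pt; auto).
  destruct (Nat.eqb m n); [destruct (Nat.eqb m 0)|].
  - rewrite D_T00; auto; unfold line; rewrite upd_same; auto.
  - rewrite D_Tii; auto; unfold line; rewrite upd_same; auto.
  - apply D_zero.
Qed.

Lemma divT_eq nu : (nu < 4)%nat ->
  divT S (Tup S rho pr) nu p = if Nat.eqb nu 0 then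
    (pd 0 rho p + 3 * pd 0 (Om S) p / Om S p * (rho p + pr p)) / alpha S p ^ 2
  else (pd nu pr p + (rho p + pr p) * pd nu (alpha S) p / alpha S p) / Om S p ^ 2.
Proof.
  intros Hn. unfold divT, sum4. rewrite !Tup_pt by lia. rewrite !pd_Tup by lia.
  repeat (rewrite Gam_eq by (auto; lia)).
  destruct nu as [|[|[|[|]]]]; try lia;
  cbv [gd gi ginv g ul Nat.eqb]; field; auto.
Qed.
End Gen2.

End P3.
Import P3.

Module P4.

Ltac exd := match goal with H : is_derive ?f ?x ?v |- ex_derive _ ?x => exists v; exact H end.
Ltac nz := repeat (match goal with |- _ * _ <> 0 => apply Rmult_integral_contrapositive_currified
   | |- / _ <> 0 => apply Rinv_neq_0_compat | |- 1 <> 0 => exact R1_neq_R0 end); auto.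
Ltac sidec := repeat split; auto; try exd; try nz.
Ltac rwd := repeat match goal with H : is_derive ?f ?x ?v |- context [Derive (fun y => ?f y) ?x] =>
   change (Derive (fun y => f y) x) with (Derive f x); rewrite (is_derive_unique f x v H) end.

Lemma G1 (wl : R -> R) x dw b c : is_derive wl x dw -> 1 + b * wl x <> 0 ->
  is_derive (fun s => (1 + c * wl s) / (1 + b * wl s)) x ((c - b) * dw / (1 + b * wl x) ^ 2).
Proof. intros H HD. auto_derive; [sidec|]. rwd. field; auto. Qed.

Lemma G2 (wl Fl : R -> R) x dw dF b R : is_derive wl x dw -> is_derive Fl x dF ->
  1 + b * wl x <> 0 -> Fl x <> 0 ->
  is_derive (fun s => R / (1 + b * wl s) / Fl s) x
    (- (R * b * dw) / ((1 + b * wl x) ^ 2 * Fl x) - R * dF / ((1 + b * wl x) * Fl x ^ 2)).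
Proof. intros H H' HD HF. auto_derive; [sidec|]. rwd. field; auto. Qed.

Lemma G3 (wl Fl : R -> R) x dw dF Rd b c R : is_derive wl x dw -> is_derive Fl x dF ->
  1 + b * wl x <> 0 -> Fl x <> 0 -> R <> 0 ->
  is_derive (fun s => Rd * (1 + c * wl s) / ((1 + b * wl s) ^ 2 * Fl s) / (R / (1 + b * wl s) / Fl s)) x
    (Rd / R * (c - b) * dw / (1 + b * wl x) ^ 2).
Proof. intros H H' HD HF HR. auto_derive; [sidec|]. rwd. field; auto. Qed.

Lemma G4 (wl dwl : R -> R) x dw ddw K b c : is_derive wl x dw -> is_derive dwl x ddw ->
  1 + b * wl x <> 0 -> 1 + c * wl x <> 0 ->
  is_derive (fun s => K * dwl s / (1 + b * wl s) ^ 2 / ((1 + c * wl s) / (1 + b * wl s))) x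
    (K * (ddw * ((1 + b * wl x) * (1 + c * wl x)) - dwl x * dw * (b * (1 + c * wl x) + c * (1 + b * wl x)))
       / ((1 + b * wl x) * (1 + c * wl x)) ^ 2).
Proof. intros H H' HD HN. auto_derive; [sidec|]. rwd. field; auto. Qed.

Section Model2.
Variables (eps0 : R) (R0f B0 : R -> R) (t1 t2 : R).
Hypothesis HRpos : forall t, t1 < t < t2 -> 0 < R0f t.
Hypothesis HRd : forall t n, t1 < t < t2 -> ex_derive_n R0f n t.
Hypothesis HBd : forall t n, t1 < t < t2 -> ex_derive_n B0 n (R0f t).
Notation SS := (mkSU eps0 R0f B0).

Lemma exR t : t1 < t < t2 -> ex_derive R0f t.
Proof. intro H. exact (HRd t 1 H). Qed.
Lemma exB t : t1 < t < t2 -> ex_derive B0 (R0f t).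
Proof. intro H. exact (HBd t 1 H). Qed.
Lemma exB1 t : t1 < t < t2 -> ex_derive (Derive B0) (R0f t).
Proof. intro H. exact (HBd t 2 H). Qed.

Definition Rq (q : pt) := R0f (q 0%nat).
Definition bq (q : pt) := B0 (Rq q).
Definition b1q (q : pt) := Derive B0 (Rq q).
Definition b2q (q : pt) := Derive (Derive B0) (Rq q).
Definition Rdq (q : pt) := Derive R0f (q 0%nat).
Definition Dq (q : pt) := 1 + bq q * w SS q.
Definition Nq (q : pt) := 1 + (bq q - Rq q * b1q q) * w SS q.
Definition dwk (k : nat) (q : pt) : R :=
  match k with
  | 1%nat => - (eps0 * q 1%nat * q 3%nat) / Fden SS q ^ 2
  | 2%nat => - (eps0 * q 2%nat * q 3%nat) / Fden SS q ^ 2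
  | _ => 2 / Fden SS q - eps0 * q 3%nat ^ 2 / Fden SS q ^ 2
  end.
Definition d2w (k l : nat) (q : pt) : R :=
  match k, l with
  | 1%nat, 2%nat | 2%nat, 1%nat => eps0 ^ 2 * q 1%nat * q 2%nat * q 3%nat / Fden SS q ^ 3
  | 1%nat, 3%nat | 3%nat, 1%nat => - (eps0 * q 1%nat) / Fden SS q ^ 2 + eps0 ^ 2 * q 1%nat * q 3%nat ^ 2 / Fden SS q ^ 3
  | _, _ => - (eps0 * q 2%nat) / Fden SS q ^ 2 + eps0 ^ 2 * q 2%nat * q 3%nat ^ 2 / Fden SS q ^ 3
  end.
Definition dAf (k : nat) (q : pt) : R :=
  match k with
  | 0%nat => Rdq q * (- (Rq q * b2q q * w SS q) * Dq q - Nq q * b1q q * w SS q) / Dq q ^ 2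
  | _ => (bq q - Rq q * b1q q - bq q) * dwk k q / Dq q ^ 2
  end.
Definition dWf (k : nat) (q : pt) : R :=
  match k with
  | 0%nat => Rdq q * Nq q / (Dq q ^ 2 * Fden SS q)
  | _ => - (Rq q * bq q * dwk k q) / (Dq q ^ 2 * Fden SS q) - Rq q * (eps0 * q k / 2) / (Dq q * Fden SS q ^ 2)
  end.

Definition Good (q : pt) := t1 < q 0%nat < t2 /\ Fden SS q <> 0 /\ Dq q <> 0 /\ Nq q <> 0.

Lemma isd_F k q : (1 <= k < 4)%nat -> is_derive (line (Fden SS) q k) (q k) (eps0 * q k / 2).
Proof. intro Hk. destruct k as [|[|[|[|]]]]; try lia; unfold line, Fden, r2; cbv [upd Nat.eqb eps];
  auto_derive; auto; field. Qed.

Lemma isd_w k q : (1 <= k < 4)%nat -> Fden SS q <> 0 -> is_derive (line (w SS) q k) (q k) (dwk k q).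
Proof. intros Hk HF. destruct k as [|[|[|[|]]]]; try lia; unfold line, w, dwk, Fden, r2 in *; cbv [upd Nat.eqb eps] in *;
  auto_derive; cbv [pow] in *; sidec; field; auto; intro Hc; apply HF; nra. Qed.

Lemma isd_dw k l q : (1 <= k < 4)%nat -> (1 <= l < 4)%nat -> k <> l -> Fden SS q <> 0 ->
  is_derive (line (dwk k) q l) (q l) (d2w k l q).
Proof. intros Hk Hl Hkl HF. destruct k as [|[|[|[|]]]]; try lia; destruct l as [|[|[|[|]]]]; try lia;
  unfold line, d2w, dwk, Fden, r2 in *; cbv [upd Nat.eqb eps] in *;
  auto_derive; cbv [pow] in *; sidec; field; auto; intro Hc; apply HF; nra. Qed.

Ltac etan := repeat (change (fun x : R => B0 x) with B0 in * ); repeat (change (fun x : R => R0f x) with R0f in * );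
  repeat (change (fun x : R => Derive B0 x) with (Derive B0) in * );
  repeat (change (fun x : R_AbsRing => Derive B0 x) with (Derive B0) in * ).

Lemma isd_alpha k q : Good q -> (k < 4)%nat -> is_derive (line (alpha SS) q k) (q k) (dAf k q).
Proof.
  intros [Ht [HF [HD HN]]] Hk. pose proof (exR _ Ht). pose proof (exB _ Ht). pose proof (exB1 _ Ht).
  destruct k as [|k].
  - eapply is_derive_ext with (f := fun s => (1 + (B0 (R0f s) - R0f s * Derive B0 (R0f s)) * w SS q) / (1 + B0 (R0f s) * w SS q));
      [intro s; reflexivity|].
    unfold Dq, Nq, bq, b1q, b2q, Rq, Rdq in *. auto_derive; etan; [sidec|]. unfold dAf, Dq, Nq, bq, b1q, b2q, Rq, Rdq. field; auto.
  - assert (Hk' : (1 <= S k < 4)%nat) by lia.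
    pose proof (G1 (line (w SS) q (S k)) (q (S k)) (dwk (S k) q) (bq q) (bq q - Rq q * b1q q) (isd_w (S k) q Hk' HF)) as G.
    destruct k as [|[|[|]]]; try lia;
    (eapply is_derive_ext; [|exact (G HD)]); intro s; reflexivity.
Qed.

Lemma isd_Om k q : Good q -> (k < 4)%nat -> is_derive (line (Om SS) q k) (q k) (dWf k q).
Proof.
  intros [Ht [HF [HD HN]]] Hk. pose proof (exR _ Ht). pose proof (exB _ Ht).
  destruct k as [|k].
  - eapply is_derive_ext with (f := fun s => R0f s / (1 + B0 (R0f s) * w SS q) / Fden SS q);
      [intro s; reflexivity|].
    unfold Dq, Nq, bq, b1q, Rq, Rdq in *. auto_derive; etan; [sidec|]. unfold dWf, Dq, Nq, bq, b1q, Rq, Rdq. field; auto.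
  - assert (Hk' : (1 <= S k < 4)%nat) by lia.
    pose proof (G2 (line (w SS) q (S k)) (line (Fden SS) q (S k)) (q (S k)) (dwk (S k) q) _ (bq q) (Rq q) (isd_w (S k) q Hk' HF) (isd_F (S k) q Hk')) as G.
    destruct k as [|[|[|]]]; try lia;
    (eapply is_derive_ext; [|exact (G HD HF)]); intro s; reflexivity.
Qed.

Lemma pd_line k f q : pd k f q = Derive (line f q k) (q k).
Proof. reflexivity. Qed.

Lemma alpha_ND q : alpha SS q = Nq q / Dq q.
Proof. reflexivity. Qed.
Lemma Om_eq q : Om SS q = Rq q / Dq q / Fden SS q.
Proof. reflexivity. Qed.

Lemma good_nz q : Good q -> alpha SS q <> 0 /\ Om SS q <> 0.
Proof. intros [Ht [HF [HD HN]]]. pose proof (HRpos _ Ht).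
  rewrite alpha_ND, Om_eq. unfold Rq. split; unfold Rdiv; nz; lra. Qed.

Definition E0 (q : pt) := dWf 0 q / Om SS q.
Definition Ek (k : nat) (q : pt) := dAf k q / alpha SS q.
Definition En (nu : nat) (q : pt) := match nu with 0%nat => E0 q | _ => Ek nu q end.

Lemma omega1_E q nu : Good q -> (nu < 4)%nat -> omega1 SS nu q = En nu q.
Proof.
  intros Hg Hn. destruct (good_nz q Hg) as [HA HW].
  rewrite (omega1_eq SS q); auto.
  - destruct nu as [|nu]; simpl Nat.eqb; cbv iota; rewrite pd_line.
    + rewrite (is_derive_unique _ _ _ (isd_Om 0 q Hg ltac:(lia))). reflexivity.
    + rewrite (is_derive_unique _ _ _ (isd_alpha (S nu) q Hg Hn)). reflexivity.
  - intros k Hk. exists (dAf k q). apply isd_alpha; auto.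
  - intros k Hk. exists (dWf k q). apply isd_Om; auto.
Qed.

Lemma exd_lin (wl : R -> R) x c : ex_derive wl x -> ex_derive (fun s => 1 + c * wl s) x.
Proof. intros H. auto_derive. auto. Qed.

Lemma good_loc p mu : Good p -> (mu < 4)%nat -> locally (p mu) (fun s => Good (upd p mu s)).
Proof.
  intros Hg Hm. pose proof Hg as [Ht [HF [HD HN]]].
  pose proof (exR _ Ht). pose proof (exB _ Ht). pose proof (exB1 _ Ht).
  destruct mu as [|mu].
  - assert (E1 : locally (p 0%nat) (fun s => Dq (upd p 0 s) <> 0)).
    { apply (locally_nz (fun s => 1 + B0 (R0f s) * w SS p)); [|exact HD].
      auto_derive. etan. sidec. }
    assert (E2 : locally (p 0%nat) (fun s => Nq (upd p 0 s) <> 0)).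
    { apply (locally_nz (fun s => 1 + (B0 (R0f s) - R0f s * Derive B0 (R0f s)) * w SS p)); [|exact HN].
      auto_derive. etan. sidec. }
    pose proof (locally_interval _ _ _ Ht) as E3.
    apply (filter_imp (fun s => (t1 < s < t2 /\ Dq (upd p 0 s) <> 0) /\ Nq (upd p 0 s) <> 0)).
    + intros s [[H3 H4] H5]. split; [exact H3|]. split; [exact HF|]. split; assumption.
    + apply filter_and; [apply filter_and|]; assumption.
  - assert (Hk : (1 <= S mu < 4)%nat) by lia.
    pose proof (isd_w _ p Hk HF) as Hw.
    assert (E0' : locally (p (S mu)) (fun s => Fden SS (upd p (S mu) s) <> 0)).
    { apply (locally_nz (line (Fden SS) p (S mu))); [exists (eps0 * p (S mu) / 2); apply isd_F; auto|].
      unfold line; rewrite upd_same; exact HF. }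
    assert (E1 : locally (p (S mu)) (fun s => Dq (upd p (S mu) s) <> 0)).
    { apply (locally_nz (fun s => 1 + bq p * line (w SS) p (S mu) s)).
      - apply exd_lin. exists (dwk (S mu) p). exact Hw.
      - unfold line; rewrite upd_same; exact HD. }
    assert (E2 : locally (p (S mu)) (fun s => Nq (upd p (S mu) s) <> 0)).
    { apply (locally_nz (fun s => 1 + (bq p - Rq p * b1q p) * line (w SS) p (S mu) s)).
      - apply exd_lin. exists (dwk (S mu) p). exact Hw.
      - unfold line; rewrite upd_same; exact HN. }
    apply (filter_imp (fun s => (Fden SS (upd p (S mu) s) <> 0 /\ Dq (upd p (S mu) s) <> 0) /\ Nq (upd p (S mu) s) <> 0)).
    + intros s [[H3 H4] H5]. split; [exact Ht|]. split; [exact H3|]. split; assumption.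
    + apply filter_and; [apply filter_and|]; assumption.
Qed.

Lemma pd_omega p mu nu : Good p -> (mu < 4)%nat -> (nu < 4)%nat ->
  pd mu (omega1 SS nu) p = Derive (line (En nu) p mu) (p mu).
Proof.
  intros Hg Hm Hn. rewrite pd_line. apply Derive_ext_loc.
  apply (filter_imp (fun s => Good (upd p mu s))); [|apply good_loc; auto].
  intros s Hs. unfold line. apply omega1_E; auto.
Qed.
End Model2.

End P4.
Import P4.

Module P5.

Section Model3.
Variables (eps0 : R) (R0f B0 : R -> R) (t1 t2 : R).
Hypothesis HRpos : forall t, t1 < t < t2 -> 0 < R0f t.
Hypothesis HRd : forall t n, t1 < t < t2 -> ex_derive_n R0f n t.
Hypothesis HBd : forall t n, t1 < t < t2 -> ex_derive_n B0 n (R0f t).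
Notation SS := (mkSU eps0 R0f B0).
Notation Good := (Good eps0 R0f B0 t1 t2).
Notation Dq := (Dq eps0 R0f B0).
Notation Nq := (Nq eps0 R0f B0).
Notation bq := (bq R0f B0).
Notation b1q := (b1q R0f B0).
Notation b2q := (b2q R0f B0).
Notation Rq := (Rq R0f).
Notation Rdq := (Rdq R0f).
Notation dwk := (dwk eps0 R0f B0).
Notation d2w := (d2w eps0 R0f B0).
Notation En := (En eps0 R0f B0).

Ltac etan := repeat (change (fun x : R => B0 x) with B0 in * ); repeat (change (fun x : R => R0f x) with R0f in * );
  repeat (change (fun x : R => Derive B0 x) with (Derive B0) in * );
  repeat (change (fun x : R_AbsRing => Derive B0 x) with (Derive B0) in * ).

Lemma isd_E0_sp p k : Good p -> (1 <= k < 4)%nat ->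
  is_derive (line (En 0) p k) (p k) (Rdq p / Rq p * ((bq p - Rq p * b1q p) - bq p) * dwk k p / Dq p ^ 2).
Proof.
  intros Hg Hk. pose proof Hg as [Ht [HF [HD HN]]]. pose proof (HRpos _ Ht).
  pose proof (G3 (line (w SS) p k) (line (Fden SS) p k) (p k) (dwk k p) _ (Rdq p) (bq p) (bq p - Rq p * b1q p) (Rq p)
     (isd_w eps0 R0f B0 k p Hk HF) (isd_F eps0 R0f B0 k p Hk)) as G.
  unfold Rq in G. destruct k as [|[|[|[|]]]]; try lia;
  (eapply is_derive_ext; [|exact (G HD HF ltac:(lra))]); intro s; reflexivity.
Qed.

Lemma isd_Ek_sp p k l : Good p -> (1 <= k < 4)%nat -> (1 <= l < 4)%nat -> k <> l ->
  is_derive (line (En k) p l) (p l)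
   (((bq p - Rq p * b1q p) - bq p) * (d2w k l p * (Dq p * Nq p) - dwk k p * dwk l p * (bq p * Nq p + (bq p - Rq p * b1q p) * Dq p))
     / (Dq p * Nq p) ^ 2).
Proof.
  intros Hg Hk Hl Hkl. pose proof Hg as [Ht [HF [HD HN]]].
  pose proof (G4 (line (w SS) p l) (line (dwk k) p l) (p l) (dwk l p) (d2w k l p) ((bq p - Rq p * b1q p) - bq p) (bq p) (bq p - Rq p * b1q p)
     (isd_w eps0 R0f B0 l p Hl HF) (isd_dw eps0 R0f B0 k l p Hk Hl Hkl HF)) as G.
  destruct k as [|[|[|[|]]]]; try lia; destruct l as [|[|[|[|]]]]; try lia;
  (eapply is_derive_ext; [|exact (G HD HN)]); intro s; reflexivity.
Qed.

Lemma isd_Ek_t p k : Good p -> (1 <= k < 4)%nat ->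
  is_derive (line (En k) p 0) (p 0%nat)
   (Rdq p * dwk k p * (- (b1q p + Rq p * b2q p) * (Dq p * Nq p)
      + Rq p * b1q p * (b1q p * w SS p * Nq p - Dq p * Rq p * b2q p * w SS p)) / (Dq p * Nq p) ^ 2).
Proof.
  intros Hg Hk. pose proof Hg as [Ht [HF [HD HN]]].
  pose proof (exR _ _ _ HRd _ Ht). pose proof (exB _ _ _ _ HBd _ Ht). pose proof (exB1 _ _ _ _ HBd _ Ht).
  destruct k as [|k]; [lia|];
  (eapply is_derive_ext with (f := fun s => ((B0 (R0f s) - R0f s * Derive B0 (R0f s) - B0 (R0f s)) * dwk (S k) p / (1 + B0 (R0f s) * w SS p) ^ 2)
     / ((1 + (B0 (R0f s) - R0f s * Derive B0 (R0f s)) * w SS p) / (1 + B0 (R0f s) * w SS p))); [intro s; reflexivity|]);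
  unfold Dq, Nq, bq, b1q, b2q, Rq, Rdq, P4.Dq, P4.Nq, P4.bq, P4.b1q, P4.b2q, P4.Rq, P4.Rdq in *;
  generalize (P4.dwk eps0 R0f B0 (S k) p); intro dd;
  auto_derive; etan; (try (sidec; fail)); field; auto.
Qed.

Lemma d2w_sym k l q : (1 <= k < 4)%nat -> (1 <= l < 4)%nat -> d2w k l q = d2w l k q.
Proof. intros Hk Hl. destruct k as [|[|[|[|]]]]; try lia; destruct l as [|[|[|[|]]]]; try lia; reflexivity. Qed.

Lemma dform_0k p k : Good p -> (1 <= k < 4)%nat ->
  dform SS 0 k p = - (Rdq p * Rq p * b2q p * dwk k p) / Nq p ^ 2.
Proof.
  intros Hg Hk. pose proof Hg as [Ht [HF [HD HN]]]. pose proof (HRpos _ Ht).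
  unfold dform. rewrite (pd_omega eps0 R0f B0 t1 t2 HRpos HRd HBd p 0 k Hg ltac:(lia) ltac:(lia)).
  rewrite (pd_omega eps0 R0f B0 t1 t2 HRpos HRd HBd p k 0 Hg ltac:(lia) ltac:(lia)).
  rewrite (is_derive_unique _ _ _ (isd_Ek_t p k Hg Hk)).
  rewrite (is_derive_unique _ _ _ (isd_E0_sp p k Hg Hk)).
  unfold Dq, Nq, bq, b1q, b2q, Rq, Rdq, P4.Dq, P4.Nq, P4.bq, P4.b1q, P4.b2q, P4.Rq, P4.Rdq in *.
  field. repeat split; auto; lra.
Qed.

Lemma dform_kl p k l : Good p -> (1 <= k < 4)%nat -> (1 <= l < 4)%nat -> dform SS k l p = 0.
Proof.
  intros Hg Hk Hl. unfold dform. destruct (Nat.eq_dec k l) as [->|Hkl]; [ring|].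
  rewrite (pd_omega eps0 R0f B0 t1 t2 HRpos HRd HBd p k l Hg ltac:(lia) ltac:(lia)).
  rewrite (pd_omega eps0 R0f B0 t1 t2 HRpos HRd HBd p l k Hg ltac:(lia) ltac:(lia)).
  rewrite (is_derive_unique _ _ _ (isd_Ek_sp p l k Hg Hl Hk ltac:(lia))).
  rewrite (is_derive_unique _ _ _ (isd_Ek_sp p k l Hg Hk Hl Hkl)).
  rewrite (d2w_sym l k p Hl Hk). set (X := (Dq p * Nq p) ^ 2). set (Y := bq p * Nq p + (bq p - Rq p * b1q p) * Dq p). set (Z := d2w k l p * (Dq p * Nq p)). unfold Rdiv. ring.
Qed.
End Model3.

End P5.
Import P5.

Module P6.

Lemma GL (r a : R -> R) x dr da : is_derive r x dr -> is_derive a x da -> 0 < r x * a x ->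
  is_derive (fun s => ln (r s * a s)) x ((dr * a x + r x * da) / (r x * a x)).
Proof. intros H1 H2 Hp. auto_derive; [sidec|]. rwd. field. split; intro Hc; rewrite Hc in Hp; lra. Qed.

Lemma GT (wl : R -> R) x dw c b1 b2 R : is_derive wl x dw -> 1 + b1 * wl x <> 0 -> R <> 0 ->
  is_derive (fun s => c / R * (1 + b2 * wl s * R / (1 + b1 * wl s))) x (c * b2 * dw / (1 + b1 * wl x) ^ 2).
Proof. intros H1 H2 H3. auto_derive; [sidec|]. rwd. field; auto. Qed.

Lemma G4th (th : R -> R) x d aR : is_derive th x d ->
  is_derive (fun s => aR * th s ^ 4) x (aR * 4 * th x ^ 3 * d).
Proof. intros H. auto_derive; [sidec|]. rwd. ring. Qed.
Lemma G4th3 (th : R -> R) x d aR : is_derive th x d ->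
  is_derive (fun s => aR * th s ^ 4 / 3) x (aR * 4 * th x ^ 3 * d / 3).
Proof. intros H. auto_derive; [sidec|]. rwd. field. Qed.

Section Model4.
Variables (eps0 : R) (R0f B0 : R -> R) (t1 t2 : R).
Hypothesis HRpos : forall t, t1 < t < t2 -> 0 < R0f t.
Hypothesis HRd : forall t n, t1 < t < t2 -> ex_derive_n R0f n t.
Hypothesis HRnz : forall t, t1 < t < t2 -> Derive R0f t <> 0.
Hypothesis HBd : forall t n, t1 < t < t2 -> ex_derive_n B0 n (R0f t).
Notation SS := (mkSU eps0 R0f B0).
Notation Good := (Good eps0 R0f B0 t1 t2).

Ltac etan := repeat (change (fun x : R => B0 x) with B0 in * ); repeat (change (fun x : R => R0f x) with R0f in * );
  repeat (change (fun x : R => Derive B0 x) with (Derive B0) in * );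
  repeat (change (fun x : R_AbsRing => Derive B0 x) with (Derive B0) in * ).

Lemma lnbeta p mu : Good p -> 0 < alpha SS p -> b2q R0f B0 p = 0 -> (mu < 4)%nat ->
  pd mu (fun q => ln (beta SS q)) p = omega1 SS mu p.
Proof.
  intros Hg Hal Hb2 Hm. pose proof Hg as [Ht [HF [HD HN]]]. pose proof (HRpos _ Ht) as HR.
  pose proof (exR _ _ _ HRd _ Ht) as [dR HdR].
  rewrite (omega1_E eps0 R0f B0 t1 t2 HRpos HRd HBd p mu Hg Hm). rewrite pd_line.
  destruct mu as [|mu].
  - pose proof (isd_alpha eps0 R0f B0 t1 t2 HRd HBd 0 p Hg ltac:(lia)) as Ha.
    pose proof (GL R0f (line (alpha SS) p 0) (p 0%nat) dR _ HdR Ha) as G.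
    erewrite (is_derive_unique (line (fun q => ln (beta SS q)) p 0));
      [| eapply is_derive_ext; [|exact (G ltac:(apply Rmult_lt_0_compat; auto))]; intro s; reflexivity].
    unfold line; rewrite upd_same.
    assert (dR = Rdq R0f p) by (unfold Rdq; symmetry; apply is_derive_unique; auto). subst dR.
    unfold En, E0, dAf, dWf. rewrite Om_eq, alpha_ND in *.
    unfold Dq, Nq, bq, b1q, b2q, Rq, Rdq in *. rewrite Hb2.
    field. repeat split; auto; lra.
  - pose proof (isd_alpha eps0 R0f B0 t1 t2 HRd HBd (S mu) p Hg Hm) as Ha.
    pose proof (GL (fun _ => R0f (p 0%nat)) (line (alpha SS) p (S mu)) (p (S mu)) 0 _ (is_derive_const _ _) Ha) as G.
    destruct mu as [|[|[|]]]; try lia;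
    (erewrite (is_derive_unique (line (fun q => ln (beta SS q)) p _));
      [| eapply is_derive_ext; [|exact (G ltac:(apply Rmult_lt_0_compat; auto))]; intro s; reflexivity]);
    unfold line; rewrite upd_same; unfold En, Ek; field; split; auto; lra.
Qed.

Section Lin.
Variables b1 b2 aR Th0 R0 : R.
Hypothesis HBlin : forall t, t1 < t < t2 -> B0 (R0f t) = b1 + b2 * R0f t.

Lemma Bder t : t1 < t < t2 -> Derive B0 (R0f t) = b2.
Proof.
  intros Ht. pose proof (exR _ _ _ HRd _ Ht) as HR. pose proof (exB _ _ _ _ HBd _ Ht) as HB.
  assert (E : Derive (fun s => B0 (R0f s)) t = Derive (fun s => b1 + b2 * R0f s) t).
  { apply Derive_ext_loc. apply (filter_imp (fun s => t1 < s < t2)); [|apply locally_interval; auto].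
    intros s Hs. apply HBlin; auto. }
  rewrite Derive_comp in E by auto.
  assert (E2 : Derive (fun s => b1 + b2 * R0f s) t = b2 * Derive R0f t).
  { apply is_derive_unique. auto_derive; auto. etan. ring. }
  rewrite E2 in E. pose proof (HRnz _ Ht). apply (Rmult_eq_reg_l (Derive R0f t)); auto. lra.
Qed.

Definition dThf (k : nat) (p : pt) : R :=
  match k with
  | 0%nat => - (Th0 * R0 * Rdq R0f p) / Rq R0f p ^ 2
  | _ => Th0 * R0 * b2 * dwk eps0 R0f B0 k p / (1 + b1 * w SS p) ^ 2
  end.

Lemma Nlin p : Good p -> Nq eps0 R0f B0 p = 1 + b1 * w SS p.
Proof. intros [Ht _]. unfold Nq, bq, b1q, Rq. rewrite HBlin, Bder by auto. ring. Qed.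

Lemma isd_Th k p : Good p -> (k < 4)%nat -> is_derive (line (Thetar SS b1 b2 Th0 R0) p k) (p k) (dThf k p).
Proof.
  intros Hg Hk. pose proof Hg as [Ht [HF [HD HN]]]. pose proof (HRpos _ Ht) as HR.
  pose proof (exR _ _ _ HRd _ Ht). rewrite (Nlin p Hg) in HN.
  destruct k as [|k].
  - eapply is_derive_ext with (f := fun s => Th0 * R0 / R0f s * (1 + b2 * w SS p * R0f s / (1 + b1 * w SS p)));
      [intro s; reflexivity|].
    auto_derive; etan; [repeat split; auto; lra|]. unfold dThf, Rdq, Rq. field. split; auto; lra.
  - assert (Hk' : (1 <= S k < 4)%nat) by lia.
    pose proof (GT (line (w SS) p (S k)) (p (S k)) (dwk eps0 R0f B0 (S k) p) (Th0 * R0) b1 b2 (Rq R0f p)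
       (isd_w eps0 R0f B0 (S k) p Hk' HF)) as G.
    unfold Rq in G.
    destruct k as [|[|[|]]]; try lia;
    (eapply is_derive_ext; [|exact (G HN ltac:(lra))]); intro s; reflexivity.
Qed.

Lemma divT_zero p nu : Good p -> (nu < 4)%nat ->
  divT SS (Tup SS (fun q => aR * Thetar SS b1 b2 Th0 R0 q ^ 4) (fun q => aR * Thetar SS b1 b2 Th0 R0 q ^ 4 / 3)) nu p = 0.
Proof.
  intros Hg Hn. pose proof Hg as [Ht [HF [HD HN]]]. pose proof (HRpos _ Ht) as HR.
  destruct (good_nz eps0 R0f B0 t1 t2 HRpos p Hg) as [HA HW].
  assert (Hr : forall k, (k < 4)%nat -> is_derive (line (fun q => aR * Thetar SS b1 b2 Th0 R0 q ^ 4) p k) (p k)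
                (aR * 4 * Thetar SS b1 b2 Th0 R0 p ^ 3 * dThf k p)).
  { intros k Hk. pose proof (G4th _ _ _ aR (isd_Th k p Hg Hk)) as G. unfold line in G at 2. rewrite upd_same in G.
    eapply is_derive_ext; [|exact G]; intro s; reflexivity. }
  assert (Hp : forall k, (k < 4)%nat -> is_derive (line (fun q => aR * Thetar SS b1 b2 Th0 R0 q ^ 4 / 3) p k) (p k)
                (aR * 4 * Thetar SS b1 b2 Th0 R0 p ^ 3 * dThf k p / 3)).
  { intros k Hk. pose proof (G4th3 _ _ _ aR (isd_Th k p Hg Hk)) as G. unfold line in G at 2. rewrite upd_same in G.
    eapply is_derive_ext; [|exact G]; intro s; reflexivity. }
  rewrite divT_eq; auto.
  - destruct nu as [|nu].
    + simpl Nat.eqb; cbv iota. rewrite !pd_line.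
      rewrite (is_derive_unique _ _ _ (Hr 0%nat ltac:(lia))).
      rewrite (is_derive_unique _ _ _ (isd_Om eps0 R0f B0 t1 t2 HRd HBd 0 p Hg ltac:(lia))).
      rewrite Om_eq in *. unfold dThf, dWf, Thetar. rewrite (Nlin p Hg) in *.
      unfold Dq, bq, Rq, Rdq, Rt in *. simpl B in *. simpl Rf in *. rewrite HBlin in * by auto.
      field. repeat split; auto; lra.
    + simpl Nat.eqb; cbv iota. rewrite !pd_line.
      rewrite (is_derive_unique _ _ _ (Hp (S nu) Hn)).
      rewrite (is_derive_unique _ _ _ (isd_alpha eps0 R0f B0 t1 t2 HRd HBd (S nu) p Hg Hn)).
      rewrite alpha_ND in *. unfold dThf, dAf, Thetar. rewrite (Nlin p Hg) in *.
      unfold Dq, bq, b1q, Rq, Rdq, Rt in *. simpl B in *. simpl Rf in *. rewrite HBlin, Bder in * by auto.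
      field. repeat split; auto; lra.
  - intros k Hk. exists (dAf eps0 R0f B0 k p). apply (isd_alpha eps0 R0f B0 t1 t2 HRd HBd); auto.
  - intros k Hk. exists (dWf eps0 R0f B0 k p). apply (isd_Om eps0 R0f B0 t1 t2 HRd HBd); auto.
  - intros k Hk. eexists. apply Hr; auto.
  - intros k Hk. eexists. apply Hp; auto.
Qed.
End Lin.
End Model4.

End P6.
Import P6.


Theorem mainTheorem12 (eps0 : R) (R0f B0 : R -> R) (t1 t2 : R) :
  (eps0 = 0 \/ eps0 = 1 \/ eps0 = -1) ->
  t1 < t2 ->
  (forall t, t1 < t < t2 -> 0 < R0f t) ->
  (forall t n, t1 < t < t2 -> ex_derive_n R0f n t) ->
  (forall t, t1 < t < t2 -> Derive R0f t <> 0) ->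
  (forall t n, t1 < t < t2 -> ex_derive_n B0 n (R0f t)) ->
  let S := mkSU eps0 R0f B0 in
  ( (forall p, InD S t1 t2 p -> forall mu nu, (mu < 4)%nat -> (nu < 4)%nat ->
        shear S mu nu p = 0 /\ dform S mu nu p = 0)
    <-> (forall t, t1 < t < t2 -> Derive_n B0 2 (R0f t) = 0) )
  /\
  ( (forall t, t1 < t < t2 -> Derive_n B0 2 (R0f t) = 0) ->
    forall p, InD S t1 t2 p -> forall mu, (mu < 4)%nat ->
      pd mu (fun q => ln (beta S q)) p = omega1 S mu p )
  /\
  ( forall b1 b2 aR Th0 R0 : R,
      (forall t, t1 < t < t2 -> B0 (R0f t) = b1 + b2 * R0f t) ->
      let rho := fun q => aR * Thetar S b1 b2 Th0 R0 q ^ 4 in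
      let pr := fun q => rho q / 3 in
      forall p, InD S t1 t2 p -> forall nu, (nu < 4)%nat ->
        divT S (Tup S rho pr) nu p = 0 ).
Proof.
  intros Heps Ht12 HRpos HRd HRnz HBd S. unfold S in *; clear S.
  assert (HG : forall p, InD (mkSU eps0 R0f B0) t1 t2 p -> Good eps0 R0f B0 t1 t2 p /\ 0 < alpha (mkSU eps0 R0f B0) p).
  { intros p [Ht [HF [HD Hal]]]. split; [|exact Hal]. split; [exact Ht|]. split; [exact HF|].
    split; [exact HD|]. intro HN. change (alpha (mkSU eps0 R0f B0) p) with (Nq eps0 R0f B0 p / Dq eps0 R0f B0 p) in Hal.
    rewrite HN in Hal. unfold Rdiv in Hal. rewrite Rmult_0_l in Hal. lra. }
  split; [split|split].
  - intros H t Ht.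
    set (p0 := fun k => if Nat.eqb k 0 then t else 0).
    assert (HF1 : Fden (mkSU eps0 R0f B0) p0 = 1) by (unfold Fden, r2, p0; simpl; ring).
    assert (Hw0 : w (mkSU eps0 R0f B0) p0 = 0) by (unfold w; rewrite HF1; unfold p0; simpl; field).
    assert (HIn : InD (mkSU eps0 R0f B0) t1 t2 p0).
    { split; [exact Ht|]. split; [rewrite HF1; lra|].
      change (B (mkSU eps0 R0f B0) (Rt (mkSU eps0 R0f B0) p0)) with (B0 (R0f t)). rewrite Hw0. split; [rewrite Rmult_0_r; lra|].
      unfold alpha. rewrite Hw0. rewrite !Rmult_0_r, Rplus_0_r. unfold Rdiv; rewrite Rinv_1; lra. }
    destruct (HG p0 HIn) as [Hg _].
    pose proof (dform_0k eps0 R0f B0 t1 t2 HRpos HRd HBd p0 3 Hg ltac:(lia)) as Hd.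
    pose proof (proj2 (H p0 HIn 0%nat 3%nat ltac:(lia) ltac:(lia))) as Hz.  rewrite Hz in Hd.
    assert (HN1 : Nq eps0 R0f B0 p0 = 1) by (unfold Nq;  rewrite Hw0; ring).
    assert (Hdw : dwk eps0 R0f B0 3 p0 = 2) by (unfold dwk;  rewrite HF1; unfold p0; simpl; field).
    rewrite HN1, Hdw in Hd. unfold Rdq, Rq, b2q, Rq in Hd. change (p0 0%nat) with t in Hd.
    pose proof (HRnz t Ht). pose proof (HRpos t Ht).
    change (Derive_n B0 2 (R0f t)) with (Derive (Derive B0) (R0f t)).
    assert (E : Derive R0f t * R0f t * 2 * Derive (Derive B0) (R0f t) = 0).
    { replace (Derive R0f t * R0f t * 2 * Derive (Derive B0) (R0f t)) with
        (- (- (Derive R0f t * R0f t * Derive (Derive B0) (R0f t) * 2) / 1 ^ 2)) by field.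
      rewrite <- Hd. ring. }
    apply Rmult_integral in E. destruct E as [E|E]; [|exact E].
    exfalso. apply Rmult_integral in E. destruct E as [E|E]; [|lra].
    apply Rmult_integral in E. destruct E as [E|E]; lra.
  - intros H p HIn mu nu Hm Hn. destruct (HG p HIn) as [Hg Hal].
    destruct (good_nz eps0 R0f B0 t1 t2 HRpos p Hg) as [HA HW].
    split.
    + apply shear_zero; auto.
      * intros k Hk. exists (dAf eps0 R0f B0 k p). apply (isd_alpha eps0 R0f B0 t1 t2 HRd HBd); auto.
      * intros k Hk. exists (dWf eps0 R0f B0 k p). apply (isd_Om eps0 R0f B0 t1 t2 HRd HBd); auto.
    + assert (Hb2 : b2q R0f B0 p = 0).
      { unfold b2q, Rq. exact (H (p 0%nat) (proj1 Hg)). }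
      destruct mu as [|mu]; destruct nu as [|nu].
      * unfold dform; ring.
      * rewrite (dform_0k eps0 R0f B0 t1 t2 HRpos HRd HBd p (Datatypes.S nu) Hg ltac:(lia)), Hb2. unfold Rdiv; ring.
      * transitivity (- dform (mkSU eps0 R0f B0) 0 (Datatypes.S mu) p); [unfold dform; ring|].
        rewrite (dform_0k eps0 R0f B0 t1 t2 HRpos HRd HBd p (Datatypes.S mu) Hg ltac:(lia)), Hb2. unfold Rdiv; ring.
      * apply (dform_kl eps0 R0f B0 t1 t2 HRpos HRd HBd p); auto; lia.
  - intros H p HIn mu Hm. destruct (HG p HIn) as [Hg Hal].
    apply (lnbeta eps0 R0f B0 t1 t2 HRpos HRd HBd p mu Hg Hal); auto.
    unfold b2q, Rq. exact (H (p 0%nat) (proj1 Hg)).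
  - intros b1 b2 aR Th0 R0 HBlin; cbv zeta; intros p HIn nu Hn. destruct (HG p HIn) as [Hg Hal].
    exact (divT_zero eps0 R0f B0 t1 t2 HRpos HRd HRnz HBd b1 b2 aR Th0 R0 HBlin p nu Hg Hn).
Qed.
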